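(* Let $n\ge 2K$, let $m_1,\dots,m_n$ be fixed constants, and let $M=\{(x_1,\dots,x_n)\in\mathbb{R}^n: x_1<x_2<\dots<x_n\}$ carry the Poisson bracket $\{f,g\}=\sum_{1\le i<j\le n}\operatorname{sgn}(x_i-x_j)\bigl(\frac{\partial f}{\partial x_i}\frac{\partial g}{\partial x_j}-\frac{\partial f}{\partial x_j}\frac{\partial g}{\partial x_i}\bigr)$, i.e. the bracket with $\{x_i,x_k\}=\operatorname{sgn}(x_i-x_k)$. Then for any subsets $I,J\subseteq\{1,\dots,K\}$, $$\Bigl\{\prod_{p\in I} m_{2p-1}m_{2p}e^{x_{2p-1}-x_{2p}},\ \prod_{q\in J} m_{2q-1}m_{2q}e^{x_{2q-1}-x_{2q}}\Bigr\}=0.$$ *)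

(* Defs.v *)
From HB Require Import structures.
From mathcomp Require Import all_boot all_order all_algebra.
From mathcomp Require Import all_classical all_reals all_analysis.
Set Implicit Arguments. Unset Strict Implicit. Unset Printing Implicit Defensive.
Import Order.TTheory GRing.Theory Num.Theory.
Import numFieldNormedType.Exports.
Local Open Scope ring_scope.

(* 1-based coordinate x_k of x in R^n (k = 1..n); 0 if out of range *)
Definition coord1 (R : realType) (n : nat) (x : 'rV[R]_n) (k : nat) : R :=
  match @insub nat (fun i => i < n)%N 'I_n k.-1 with
  | Some i => x ord0 i
  | None => 0
  end.

Definition partial (R : realType) (n : nat) (i : 'I_n)
  (f : 'rV[R]_n -> R) (x : 'rV[R]_n) : R :=
  'D_(delta_mx ord0 i) f x.

Definition pbracket (R : realType) (n : nat) (f g : 'rV[R]_n -> R)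
  (x : 'rV[R]_n) : R :=
  \sum_(i < n) \sum_(j < n | (i < j)%N)
     Num.sg (x ord0 i - x ord0 j) *
     (partial i f x * partial j g x - partial j f x * partial i g x).

Definition inM (R : realType) (n : nat) (x : 'rV[R]_n) : Prop :=
  forall i j : 'I_n, (i < j)%N -> x ord0 i < x ord0 j.

(* prod_{p in I} m_{2p-1} m_{2p} exp(x_{2p-1} - x_{2p}); I a subset of
   {1..K} encoded as a subset of 'I_K with p = i+1 *)
Definition prodF (R : realType) (n K : nat) (m : nat -> R) (I : {set 'I_K})
  (x : 'rV[R]_n) : R :=
  \prod_(i in I)
    (m (2 * i.+1 - 1)%N * m (2 * i.+1)%N *
     expR (coord1 x (2 * i.+1 - 1)%N - coord1 x (2 * i.+1)%N)).

(* Main.v *)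
Require Import Defs.
From HB Require Import structures.
From mathcomp Require Import all_boot all_order all_algebra.
From mathcomp Require Import all_classical all_reals all_analysis.
From mathcomp Require Import ring lra zify.
Import Order.TTheory GRing.Theory Num.Theory.
Import numFieldNormedType.Exports.
Local Open Scope ring_scope.
Section S.
Variables (R : realType) (n K : nat) (m : nat -> R).

Definition Lf (I : {set 'I_K}) (y : 'rV[R]_n) : R :=
  \sum_(p in I) (coord1 y (2 * p.+1 - 1)%N - coord1 y (2 * p.+1)%N).
Definition Cf (I : {set 'I_K}) : R :=
  \prod_(p in I) (m (2 * p.+1 - 1)%N * m (2 * p.+1)%N).

Lemma prodF_exp I y : prodF m I y = Cf I * expR (Lf I y).
Proof. by rewrite /prodF big_split /= expR_sum. Qed.

Lemma coord1_lin (h : R) v x k :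
  coord1 (h *: v + x) k = h * coord1 v k + coord1 (x : 'rV[R]_n) k.
Proof. by rewrite /coord1; case: insubP => [i _ _|_]; rewrite ?mxE ?mulr0 ?addr0. Qed.

Lemma Lf_lin I (h : R) v x : Lf I (h *: v + x) = h * Lf I v + Lf I x.
Proof.
rewrite /Lf mulr_sumr -big_split /=; apply: eq_bigr => p _.
rewrite !coord1_lin; ring.
Qed.

Lemma D_expR (a c : R) : 'D_c expR a = c * expR a.
Proof.
have dif : differentiable expR a by apply/derivable1_diffP; exact: derivable_expR.
by rewrite deriveE // diff1E // derive1E derive_val.
Qed.

Lemma partial_prodF I (k : 'I_n) x :
  partial k (prodF m I) x = prodF m I x * Lf I (delta_mx ord0 k).
Proof.
rewrite /partial.
set c := Lf I (delta_mx ord0 k).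
have -> : 'D_(delta_mx ord0 k) (prodF m I) x = 'D_c (Cf I \*: expR) (Lf I x).
  rewrite /derive; set d := (fun _ : R => _); set d' := (fun _ : R => _).
  suff -> : d = d' by [].
  apply/funext => h; rewrite /d /d' /= !prodF_exp Lf_lin.
  by rewrite -/c /=.
have -> : 'D_c (Cf I \*: expR) (Lf I x) = Cf I *: 'D_c expR (Lf I x).
  apply: deriveZ; apply: diff_derivable; apply/derivable1_diffP; exact: derivable_expR.
rewrite D_expR prodF_exp /=; change (Cf I * (c * expR (Lf I x)) = Cf I * expR (Lf I x) * c); ring.
Qed.

Definition sgn2 (a b : nat) : R := (a < b)%N%:R - (b < a)%N%:R.

Lemma S0 (a b : 'I_n -> R) :
  \sum_(i < n) \sum_(j < n | (i < j)%N) (a i * b j - a j * b i) =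
  \sum_(i < n) \sum_(j < n) sgn2 i j * a i * b j.
Proof.
have E1 : \sum_(i < n) \sum_(j < n | (i < j)%N) (a i * b j - a j * b i) =
  \sum_(i < n) \sum_(j < n | (i < j)%N) a i * b j -
  \sum_(i < n) \sum_(j < n | (i < j)%N) a j * b i.
  by rewrite -sumrB; apply: eq_bigr => i _; rewrite sumrB.
rewrite E1 [X in _ - X](exchange_big_dep xpredT) //= -sumrB; apply: eq_bigr => i _.
rewrite [RHS](eq_bigr (fun j : 'I_n => (if (i < j)%N then a i * b j else 0) -
   (if (j < i)%N then a i * b j else 0))); last first.
  by move=> j _; rewrite /sgn2; case: ltngtP => h /=; ring.
by rewrite sumrB; congr (_ - _); apply: big_mkcond.
Qed.

Lemma delta1 (F : nat -> R) {al : nat} : (al < n)%N ->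
  \sum_(i < n) (i == al :> nat)%:R * F i = F al.
Proof.
move=> H; rewrite (bigD1 (Ordinal H)) //= eqxx mul1r big1 ?addr0 // => i hi.
have : val i != al by apply: contraNneq hi => e; apply/eqP/val_inj.
by move/negbTE => ->; rewrite mul0r.
Qed.

Lemma delta2 (F : nat -> R) (al be : nat) : (al < n)%N -> (be < n)%N ->
  \sum_(i < n) ((i == al :> nat)%:R - (i == be :> nat)%:R) * F i = F al - F be.
Proof.
move=> ha hb; rewrite -(delta1 F ha) -(delta1 F hb) -sumrB.
by apply: eq_bigr => i _; rewrite mulrBl.
Qed.

Lemma sgn2_gt a b : (a < b)%N -> sgn2 a b = 1.
Proof. by move=> h; rewrite /sgn2 h ltnNge ltnW //= subr0. Qed.
Lemma sgn2_lt a b : (b < a)%N -> sgn2 a b = -1.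
Proof. by move=> h; rewrite /sgn2 h ltnNge ltnW //= sub0r. Qed.
Lemma sgn2_eq a : sgn2 a a = 0.
Proof. by rewrite /sgn2 ltnn subrr. Qed.

Lemma quad (p q : nat) :
  sgn2 (2 * p) (2 * q) - sgn2 (2 * p) (2 * q + 1) -
  (sgn2 (2 * p + 1) (2 * q) - sgn2 (2 * p + 1) (2 * q + 1)) = 0.
Proof.
case: (ltngtP p q) => h.
- by rewrite !sgn2_gt; try lia; rewrite !subrr.
- by rewrite !sgn2_lt; try lia; rewrite !subrr.
- rewrite h sgn2_eq sgn2_eq sgn2_gt ?sgn2_lt; try lia; ring.
Qed.


Definition aI (I : {set 'I_K}) (i : nat) : R :=
  \sum_(p in I) ((i == 2 * p)%N%:R - (i == 2 * p + 1)%N%:R).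

Lemma coord1_delta (k : 'I_n) j : (0 < j)%N -> (j <= n)%N ->
  coord1 (delta_mx ord0 k) j = (val k == j.-1)%:R :> R.
Proof.
move=> h0 h1; rewrite /coord1; case: insubP => [i _ hv|hn].
  by rewrite mxE /= eq_sym -hv.
by exfalso; move: hn; rewrite /=; lia.
Qed.

Lemma Lf_delta (hn : (2 * K <= n)%N) I (k : 'I_n) :
  Lf I (delta_mx ord0 k) = aI I k.
Proof.
apply: eq_bigr => p _; have := ltn_ord p => hp.
rewrite !coord1_delta; try lia.
have -> : ((2 * p.+1 - 1).-1 = 2 * p)%N by lia.
by have -> : ((2 * p.+1).-1 = 2 * p + 1)%N by lia.
Qed.

Lemma sum_zero (hn : (2 * K <= n)%N) I J :
  \sum_(i < n) \sum_(j < n) sgn2 i j * aI I i * aI J j = 0.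
Proof.
pose T (i : nat) := \sum_(j < n) sgn2 i j * aI J j.
have ET : forall i, T i = \sum_(q in J) (sgn2 i (2 * q) - sgn2 i (2 * q + 1)).
  move=> i; rewrite /T /aI.
  under eq_bigr => j _ do rewrite mulr_sumr.
  rewrite exchange_big /=; apply: eq_bigr => q _.
  have := ltn_ord q => hq.
  rewrite -delta2; try lia.
  by apply: eq_bigr => j _; rewrite mulrC.
transitivity (\sum_(i < n) aI I i * T i).
  apply: eq_bigr => i _; rewrite /T mulr_sumr; apply: eq_bigr => j _; ring.
rewrite /aI.
under eq_bigr => i _ do rewrite mulr_suml.
rewrite exchange_big /=; apply: big1 => p _.
have := ltn_ord p => hp.
rewrite delta2; try lia.
rewrite !ET -sumrB; apply: big1 => q _; exact: quad.
Qed.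

End S.

Theorem lemma2 (R : realType) (n K : nat) (m : nat -> R)
  (hn : (2 * K <= n)%N) (I J : {set 'I_K}) (x : 'rV[R]_n) :
  inM x -> pbracket (prodF m I) (prodF m J) x = 0.
Proof.
move=> hM; rewrite /pbracket.
transitivity (\sum_(i < n) \sum_(j < n | (i < j)%N)
   (- (prodF m I x * prodF m J x)) *
   (@aI R K I i * @aI R K J j - @aI R K I j * @aI R K J i)).
  apply: eq_bigr => i _; apply: eq_bigr => j hij.
  rewrite !partial_prodF !Lf_delta // ltr0_sg; last by rewrite subr_lt0; exact: hM.
  ring.
under eq_bigr => i _ do rewrite -mulr_sumr.
by rewrite -mulr_sumr S0 sum_zero // mulr0.
Qed.
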